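(* Let $K$ be a finite field of characteristic $p$ and order $q$, and let $d$ be an integer coprime to $q-1$. Then $$V_{K,d}=\min_{\chi\in\widehat{K^\times},\ \chi\neq 1}\nu_p\big(G_K(\chi)\,G_K(\bar\chi^{\,d})\big).$$
   Context: $\psi_K(x)=\exp(2\pi i\,\mathrm{Tr}_{K/\mathbb{F}_p}(x)/p)$; $W_{K,d}(a)=\sum_{x\in K}\psi_K(x^d+ax)$. $\widehat{K^\times}$ is the group of multiplicative characters of $K$, and for $\chi\in\widehat{K^\times}$ the Gauss sum is $G_K(\chi)=\sum_{a\in K^\times}\chi(a)\psi_K(a)$. $\nu_p$ denotes the $p$-adic valuation, normalized by $\nu_p(p)=1$, extended to $\mathbb{Q}(\zeta_p,\zeta_{q-1})$ (so fractional values may occur), with $\nu_p(0)=\infty$. Define $V_{K,d}=\min_{a\in K^\times}\nu_p(W_{K,d}(a))$. *)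

(* Defs.v *)
From mathcomp Require Import all_boot all_order all_algebra all_field.
Set Implicit Arguments. Unset Strict Implicit. Unset Printing Implicit Defensive.
Import Order.TTheory GRing.Theory Num.Theory.
Local Open Scope ring_scope.

(* ---- extended valuation values: option rat, with None = +infinity ---- *)
Definition oadd (a b : option rat) : option rat :=
  match a, b with Some x, Some y => Some (x + y) | _, _ => None end.
Definition omin (a b : option rat) : option rat :=
  match a, b with
  | None, _ => b
  | _, None => a
  | Some x, Some y => Some (Num.min x y)
  end.
Definition ole (a b : option rat) : bool :=
  match a, b with
  | _, None => true
  | None, Some _ => false
  | Some x, Some y => x <= y
  end.

Definition is_omin (P : option rat -> Prop) (m : option rat) : Prop :=
  P m /\ forall x, P x -> ole m x.

(* v is a (rational-valued) valuation on algC extending nu_p, i.e. nu_p(p)=1,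
   nu_p(0) = infinity.  Every extension of nu_p to Q(zeta_p, zeta_{q-1})
   is the restriction of such a v. *)
Definition pval (p : nat) (v : algC -> option rat) : Prop :=
  [/\ forall x, v x = None <-> x = 0,
      forall x y, v (x * y) = oadd (v x) (v y),
      forall x y, ole (omin (v x) (v y)) (v (x + y))
    & v p%:R = Some 1].

Section FF.
Variables (K : finFieldType) (p : nat).

(* zeta_p = exp(2 pi i / p): p.-root (-1) is exp(i pi / p) (minimal argument) *)
Definition zeta_p : algC := (p.-root (-1)) ^+ 2.

Definition absTr (x : K) : K := \sum_(i < logn p #|K|) x ^+ (p ^ i).

Definition trnat (x : K) : nat :=
  odflt ord0 [pick k : 'I_p.+1 | (k < p)%N && ((k%:R : K) == absTr x)].

Definition psiK (x : K) : algC := zeta_p ^+ trnat x.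

Definition WKd (d : nat) (a : K) : algC := \sum_(x : K) psiK (x ^+ d + a * x).

(* multiplicative characters of K^x, represented as functions K -> algC
   (the value at 0 is irrelevant and never used) *)
Definition mchar (chi : K -> algC) : Prop :=
  chi 1 = 1 /\ forall x y : K, x != 0 -> y != 0 -> chi (x * y) = chi x * chi y.
Definition mchar_nontriv (chi : K -> algC) : Prop :=
  exists2 a : K, a != 0 & chi a != 1.

Definition gaussK (chi : K -> algC) : algC :=
  \sum_(a : K | a != 0) chi a * psiK a.

Definition VKd (v : algC -> option rat) (d : nat) : option rat :=
  \big[omin/None]_(a : K | a != 0) v (WKd d a).

End FF.

(* Main.v *)
Require Import Defs.
From mathcomp Require Import all_boot all_order all_algebra all_field.
From mathcomp Require Import ring lra.
From mathcomp Require Import cyclic.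
Import Order.TTheory GRing.Theory Num.Theory.
Local Open Scope ring_scope.

Lemma ole_refl a : ole a a.
Proof. by case: a => //= x; rewrite lexx. Qed.
Lemma ole_trans a b c : ole a b -> ole b c -> ole a c.
Proof. by move: a b c => [x|] [y|] [z|] //=; apply: le_trans. Qed.
Lemma ole_total a b : ole a b || ole b a.
Proof. by move: a b => [x|] [y|] //=; apply: le_total. Qed.
Lemma ole_anti a b : ole a b -> ole b a -> a = b.
Proof. by move: a b => [x|] [y|] //= h1 h2; congr Some; apply/eqP; rewrite eq_le h1 h2. Qed.
Lemma omin_glb x a b : ole x (omin a b) = ole x a && ole x b.
Proof. by move: x a b => [x|] [y|] [z|] //=; rewrite ?andbT // le_min. Qed.
Lemma ole_ominl a b : ole (omin a b) a.
Proof. by move: a b => [x|] [y|] //=; rewrite ?lexx // ge_min lexx. Qed.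
Lemma ole_ominr a b : ole (omin a b) b.
Proof. by move: a b => [x|] [y|] //=; rewrite ?lexx // ge_min lexx orbT. Qed.
Lemma omin_l a b : ole a b -> omin a b = a.
Proof. by move: a b => [x|] [y|] //= h; congr Some; apply/min_idPl. Qed.
Lemma omin_mono a b c d : ole a b -> ole c d -> ole (omin a c) (omin b d).
Proof. move=> h1 h2; rewrite omin_glb; apply/andP; split.
  exact: ole_trans (ole_ominl _ _) h1. exact: ole_trans (ole_ominr _ _) h2. Qed.
Lemma oadd_mono a b c d : ole a b -> ole c d -> ole (oadd a c) (oadd b d).
Proof. by move: a b c d => [x|] [y|] [z|] [w|] //=; apply: lerD. Qed.
Lemma omin_cases a b : omin a b = a \/ omin a b = b.
Proof. move: a b => [x|] [y|] /=; try by [left|right].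
  rewrite /Num.min /Order.min; case: ifP; by [left|right]. Qed.
Lemma omin_r a b : ole b a -> omin a b = b.
Proof. move: a b => [x|] [y|] //= h; congr Some; apply/min_idPr; exact: h. Qed.

Set Implicit Arguments. Unset Strict Implicit. Unset Printing Implicit Defensive.

Section Val.
Variables (p : nat) (v : algC -> option rat) (hv : pval p v).

Lemma v0 : v 0 = None.
Proof. by case: hv => h _ _ _; apply/h. Qed.
Lemma vM x y : v (x * y) = oadd (v x) (v y).
Proof. by case: hv. Qed.
Lemma vD x y : ole (omin (v x) (v y)) (v (x + y)).
Proof. by case: hv. Qed.
Lemma vp : v p%:R = Some 1.
Proof. by case: hv. Qed.
Lemma v_some x : x != 0 -> exists r, v x = Some r.
Proof.
case: hv => h _ _ _ nz; case E: (v x) => [r|]; first by exists r.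
by move/h: E => E; rewrite E eqxx in nz.
Qed.
Lemma v1 : v 1 = Some 0.
Proof.
have [r hr] := @v_some 1 (oner_neq0 _).
have := vM 1 1; rewrite mulr1 hr /= => [[]] /(congr1 (fun t => t - r)).
by rewrite subrr addrK => <-.
Qed.
Lemma vX x k : v (x ^+ k) = if k is 0%N then Some 0 else
   match v x with Some r => Some (r *+ k) | None => None end.
Proof.
elim: k => [|k IH]; first by rewrite expr0 v1.
rewrite exprS vM IH; case: k IH => [|k] IH; case: (v x) => [r|] //=.
by rewrite addr0.
Qed.
Lemma v_root1 z m : (0 < m)%N -> z ^+ m = 1 -> v z = Some 0.
Proof.
move=> m0 zm; have := vX z m; rewrite zm v1; case: m m0 zm => // m _ zm.
case: (v z) => // r [] /esym /eqP; rewrite mulrn_eq0 /= => /eqP ->.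
by [].
Qed.
Lemma vN1 : v (-1) = Some 0.
Proof. by apply: (@v_root1 _ 2) => //; rewrite sqrrN expr1n. Qed.
Lemma vN x : v (- x) = v x.
Proof. by rewrite -mulN1r vM vN1; case: (v x) => //= r; rewrite add0r. Qed.
Lemma vB x y : ole (omin (v x) (v y)) (v (x - y)).
Proof. by rewrite -(vN y); apply: vD. Qed.
Lemma v_mulunit x z : v z = Some 0 -> v (x * z) = v x.
Proof. by move=> hz; rewrite vM hz; case: (v x) => //= r; rewrite addr0. Qed.

Lemma v_sum (I : Type) (r : seq I) (P : pred I) (F : I -> algC) :
  ole (\big[omin/None]_(i <- r | P i) v (F i)) (v (\sum_(i <- r | P i) F i)).
Proof.
apply: (big_ind2 (fun a b => ole a (v b))); first by rewrite v0.
  move=> x1 x2 y1 y2 h1 h2; apply: ole_trans (vD _ _).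
  exact: omin_mono.
by move=> i _; apply: ole_refl.
Qed.

Lemma v_strict x y : ~~ ole (v y) (v x) -> v (x + y) = v x.
Proof.
move=> h; have hxy : ole (v x) (v y) by case/orP: (ole_total (v x) (v y)) => // h'; rewrite h' in h.
apply: ole_anti; last by have := vD x y; rewrite omin_l.
have := vB (x + y) y; rewrite addrK => h2.
case: (omin_cases (v (x + y)) (v y)) => E; rewrite E in h2; first by [].
by rewrite h2 in h.
Qed.
End Val.

Lemma big_omin_glb (I : Type) (r : seq I) (P : pred I) (F : I -> option rat) x :
  (forall i, P i -> ole x (F i)) -> ole x (\big[omin/None]_(i <- r | P i) F i).
Proof.
move=> h; apply: (big_ind (fun a => ole x a)); first by case: x {h}.
  by move=> a b ha hb; rewrite omin_glb ha hb.
exact: h.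
Qed.
Lemma big_omin_lb (I : eqType) (r : seq I) (P : pred I) (F : I -> option rat) i :
  i \in r -> P i -> ole (\big[omin/None]_(j <- r | P j) F j) (F i).
Proof.
move=> ir Pi; elim: r ir => // a r IH; rewrite in_cons big_cons.
case/orP => [/eqP <-| ir]; first by rewrite Pi; exact: ole_ominl.
case: (P a); last exact: IH.
exact: ole_trans (ole_ominr _ _) (IH ir).
Qed.
Lemma big_omin_attained (I : Type) (r : seq I) (P : pred I) (F : I -> option rat) :
  \big[omin/None]_(i <- r | P i) F i = None \/
  exists2 i, P i & \big[omin/None]_(i <- r | P i) F i = F i.
Proof.
apply: (big_ind (fun a => a = None \/ exists2 i, P i & a = F i)); first by left.
  move=> a b ha hb; case: (omin_cases a b) => ->; by [].
by move=> i Pi; right; exists i.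
Qed.
Lemma big_omin_att2 (I : eqType) (r : seq I) (F : I -> option rat) :
  \big[omin/None]_(i <- r) F i = None \/
  exists2 i, i \in r & \big[omin/None]_(i <- r) F i = F i.
Proof.
elim: r => [|a r IH]; first by left; rewrite big_nil.
rewrite big_cons; case: (omin_cases (F a) (\big[omin/None]_(i <- r) F i)) => ->.
  by right; exists a; rewrite ?mem_head.
case: IH => [->|[i ir ->]]; first by left.
by right; exists i; rewrite // in_cons ir orbT.
Qed.


Lemma pow1_coprime (R : pzRingType) (z : R) m n :
  (0 < m)%N -> coprime m n -> z ^+ m = 1 -> z ^+ n = 1 -> z = 1.
Proof.
move=> m0 cmn zm zn; have [a _ /dvdnP[c hc]] := Bezoutl n m0.
move/eqP: cmn hc => -> hc.
have : z ^+ (1 + a * n) = 1 by rewrite hc mulnC exprM zm expr1n.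
by rewrite exprD expr1 mulnC exprM zn expr1n mulr1.
Qed.

Lemma conj_root1 (z : algC) m : (0 < m)%N -> z ^+ m = 1 -> z^* = z^-1.
Proof.
move=> m0 zm; have zn0 : z != 0.
  by apply: contra_eq_neq zm => ->; rewrite expr0n eqn0Ngt m0 eq_sym oner_eq0.
have nz : `|z| = 1.
  apply/eqP; rewrite -(pexpr_eq1 m0) ?normr_ge0 //.
  by rewrite -normrX zm normr1.
have h : z * z^* = 1 by rewrite -normCK nz expr1n.
by rewrite -[z^*]mul1r -(mulVf zn0) -mulrA h mulr1.
Qed.

Lemma zeta_root (p : nat) : prime p -> zeta_p p ^+ p = 1.
Proof.
move=> pp; rewrite /zeta_p -exprM mulnC exprM rootCK ?prime_gt0 //.
by rewrite sqrrN expr1n.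
Qed.

Lemma zeta_neq1 (p : nat) : prime p -> zeta_p p != 1.
Proof.
move=> pp; have p0 := prime_gt0 pp; pose r := p.-root (-1 : algC).
have rp : r ^+ p = -1 by rewrite rootCK.
rewrite /zeta_p -/r; apply/negP => /eqP r21.
have [p2|podd] := boolP (p == 2%N).
  by move: rp r21; rewrite (eqP p2) => -> /eqP; rewrite eq_sym -addr_eq0 -(natrD _ 1 1) pnatr_eq0.
have op : odd p by move: (prime_gt1 pp) podd; case/even_prime: pp => [->|] //.
have rm1 : r = -1.
  by rewrite -rp -(odd_double_half p) op exprD expr1 -mul2n exprM r21 expr1n mulr1.
(* find another p-th root of -1 with Im >= 0 and Re > -1 *)
have p1 : (1 < p)%N := prime_gt1 pp.
have [u pu] := C_prim_root_exists p0.
have up : u ^+ p = 1 := prim_expr_order pu.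
have un1 : u != 1.
  apply/eqP => hu; have := prim_order_dvd pu 1; rewrite expr1 hu eqxx => /dvdn_leq.
  by move/(_ isT); rewrite leqNgt p1.
have nu : `|u| = 1.
  by apply/eqP; rewrite -(pexpr_eq1 p0) ?normr_ge0 // -normrX up normr1.
have Reu : 'Re u < 1.
  have := leif_Re_Creal u; rewrite nu => /leifP; case: ifP => // u0 /eqP Re1.
  exfalso; move: un1; rewrite -(pexpr_eq1 p0 u0) up eqxx //.
pose y := if 0 <= 'Im u then - u^* else - u.
have Imy : 0 <= 'Im y.
  rewrite /y; case: ifP => h; rewrite raddfN /=.
    by rewrite Im_conj opprK.
  by rewrite oppr_ge0; have := Creal_Im u; rewrite realE h.
have yp : y ^+ p = -1.
  have ex : (- (1 : algC)) ^+ p = -1 by rewrite -signr_odd op.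
  rewrite /y; case: ifP => _; rewrite exprNn -[(-1) ^+ p]/((- 1) ^+ p) ex ?mulN1r.
    by rewrite -rmorphXn up rmorph1.
  by rewrite up.
have Rey : - 1 < 'Re y.
  rewrite /y; case: ifP => _; rewrite raddfN /= ?Re_conj ltrN2 //.
have := rootC_Re_max p0 yp Imy; rewrite -/r rm1 raddfN /= .
rewrite (Creal_ReP 1 (rpred1 _)) => h.
by move: (lt_le_trans Rey h); rewrite ltxx.
Qed.


Section Tr.
Variables (K : finFieldType) (p : nat) (hp : p \in [pchar K]).
Let pp : prime p := pcharf_prime hp.
Local Notation n := (logn p #|K|).

Lemma cardK : #|K| = (p ^ n)%N.
Proof. exact: (card_pprimeChar hp). Qed.

Lemma card_gt1 : (1 < #|K|)%N.
Proof.
apply: (@leq_trans #|[set (0 : K); 1]|); first by rewrite cards2 eq_sym oner_eq0.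
exact: max_card.
Qed.

Lemma n_gt0 : (0 < n)%N.
Proof. by rewrite lt0n; apply/eqP => h; move: card_gt1; rewrite cardK h. Qed.

Lemma frobX (x y : K) i : (x + y) ^+ (p ^ i) = x ^+ (p ^ i) + y ^+ (p ^ i).
Proof. by apply: exprDn_pchar; rewrite pnatX pnatE // hp. Qed.

Lemma absTrD (x y : K) : absTr p (x + y) = absTr p x + absTr p y.
Proof. by rewrite /absTr -big_split; apply: eq_bigr => i _; rewrite frobX. Qed.

Lemma absTr0 : absTr p (0 : K) = 0.
Proof. by rewrite /absTr big1 // => i _; rewrite expr0n expn_eq0 eqn0Ngt (prime_gt0 pp). Qed.

Lemma absTr_frob (x : K) : absTr p x ^+ p = absTr p x.
Proof.
rewrite /absTr -(pFrobenius_autE hp) rmorph_sum /=.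
under eq_bigr => i _ do rewrite pFrobenius_autE -exprM -expnSr.
have h := big_ord_recl n (fun i : 'I_n.+1 => x ^+ (p ^ i)) (op := +%R) (idx := 0).
rewrite big_ord_recr /= -cardK expf_card expn0 expr1 in h.
by apply: (addIr x); rewrite h addrC.
Qed.

Lemma natK_inj a b : (a < p)%N -> (b < p)%N -> a%:R = b%:R :> K -> a = b.
Proof.
wlog ab : a b / (a <= b)%N => [H ha hb e|].
  by case: (leqP a b) => [h|h]; [apply: H|symmetry; apply: H => //; apply: ltnW].
move=> ha hb e; have : (p %| b - a)%N.
  by rewrite (dvdn_pcharf hp) natrB // e subrr.
have [e0|nz] := eqVneq (b - a)%N 0%N.
  by move=> _; apply/eqP; rewrite eqn_leq ab -subn_eq0 e0.
move/dvdn_leq; rewrite lt0n nz => /(_ isT) h.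
have : (b - a < p)%N by apply: leq_ltn_trans (leq_subr _ _) hb.
by rewrite ltnNge h.
Qed.

Lemma primefield (y : K) : y ^+ p = y -> exists2 k, (k < p)%N & k%:R = y.
Proof.
move=> yp.
have [/existsP [k /eqP hk]|none] := boolP [exists k : 'I_p, (k%:R == y :> K)].
  by exists k.
exfalso.
pose P : {poly K} := 'X^p - 'X.
pose s := y :: [seq k%:R | k <- iota 0 p].
have p1 := prime_gt1 pp.
have P0 : P != 0.
  apply/eqP => h; have := congr1 (fun q : {poly K} => q`_p) h.
  rewrite coefB coefXn coefX eqxx (gtn_eqF p1) subr0 coef0 => /eqP.
  by rewrite oner_eq0.
have sP : (size P <= p.+1)%N.
  apply: leq_trans (size_polyD _ _) _; rewrite size_polyN size_polyXn size_polyX.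
  by rewrite geq_max leqnn ltnS ltnW.
have frobnat (k : nat) : (k%:R : K) ^+ p = k%:R.
  by rewrite -(pFrobenius_autE hp) rmorph_nat.
have rs : all (root P) s.
  apply/allP => z; rewrite inE => /orP[/eqP ->|/mapP[k _ ->]];
  by rewrite /root !hornerE ?frobnat ?yp subrr.
have us : uniq s.
  rewrite /= map_inj_in_uniq ?iota_uniq ?andbT.
    apply/mapP => [[k]]; rewrite mem_iota add0n => /andP[_ kp] ek.
    by move/existsP: none; apply; exists (Ordinal kp); rewrite ek.
  move=> a b; rewrite !mem_iota !add0n => /andP[_ ap] /andP[_ bp].
  exact: natK_inj.
have := max_poly_roots P0 rs us.
by rewrite /= size_map size_iota ltnNge sP.
Qed.
End Tr.


Section Psi.
Variables (K : finFieldType) (p : nat) (hp : p \in [pchar K]).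
Let pp : prime p := pcharf_prime hp.
Local Notation n := (logn p #|K|).

Lemma trnat_spec (x : K) : (trnat p x < p)%N /\ (trnat p x)%:R = absTr p x.
Proof.
have [k kp hk] := primefield hp (absTr_frob hp x).
rewrite /trnat; case: pickP => [j /andP[jp /eqP e]|none] //=.
by move: (none (Ordinal (ltnW kp : (k < p.+1)%N))) => /=; rewrite kp hk eqxx.
Qed.

Lemma trnatD (x y : K) : trnat p (x + y) = ((trnat p x + trnat p y) %% p)%N.
Proof.
have [h1 e1] := trnat_spec (x + y); have [h2 e2] := trnat_spec x; have [h3 e3] := trnat_spec y.
apply: (natK_inj hp) => //; first by rewrite ltn_mod prime_gt0.
by rewrite GRing.natr_mod_pchar // natrD e1 e2 e3 absTrD.
Qed.

Lemma trnat0 : trnat p (0 : K) = 0%N.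
Proof.
have [h1 e1] := trnat_spec 0; apply: (natK_inj hp) => //; first exact: prime_gt0.
by rewrite e1 absTr0.
Qed.

Lemma psiD (x y : K) : psiK p (x + y) = psiK p x * psiK p y.
Proof. by rewrite /psiK trnatD expr_mod ?exprD // zeta_root. Qed.

Lemma psi0 : psiK p (0 : K) = 1.
Proof. by rewrite /psiK trnat0. Qed.

Lemma psi_root (x : K) : psiK p x ^+ p = 1.
Proof. by rewrite /psiK -exprM mulnC exprM zeta_root // expr1n. Qed.

Lemma absTr_nontriv : exists x : K, absTr p x != 0.
Proof.
have [/existsP[x hx]|/existsPn all0] := boolP [exists x : K, absTr p x != 0].
  by exists x.
exfalso.
have h0 (x : K) : absTr p x = 0 by apply/eqP; move: (all0 x); rewrite negbK.
have := n_gt0 hp; case E: n => [//|m] _.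
pose Q : {poly K} := \sum_(i < n) 'X^(p ^ i).
have Qx x : Q.[x] = absTr p x by rewrite horner_sum; apply: eq_bigr => i _; rewrite hornerXn.
have Q0 : Q != 0.
  apply/eqP => h; have := congr1 (fun q : {poly K} => q`_(p ^ m)) h.
  rewrite coef0 coef_sum /=.
  move: (E); rewrite /Q => ->; rewrite big_ord_recr /= coefXn eqxx big1 ?add0r ?oner_eq0 //.
    by move=> /eqP; rewrite oner_eq0.
  move=> i _; rewrite coefXn eqn_exp2l ?prime_gt1 //.
  by rewrite (gtn_eqF (ltn_ord i)).
have sQ : (size Q <= (p ^ m).+1)%N.
  apply: leq_trans (size_sum _ _ _) _; apply/bigmax_leqP => i _.
  rewrite size_polyXn ltnS leq_pexp2l ?prime_gt0 //.
  by rewrite -ltnS -E ltn_ord.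
have := @max_poly_roots _ Q (enum K) Q0.
rewrite enum_uniq; have -> : all (root Q) (enum K).
  by apply/allP => x _; rewrite /root Qx h0.
move=> /(_ isT isT); rewrite -cardE (cardK hp) E => h.
have : ((p ^ m.+1)%N < (p ^ m)%N.+1)%N by exact: leq_trans h sQ.
rewrite expnS ltnS -{2}(mul1n (p ^ m)%N) leq_pmul2r ?expn_gt0 ?prime_gt0 //.
by rewrite leqNgt prime_gt1.
Qed.

Lemma psi_nontriv : exists x : K, psiK p x != 1.
Proof.
have [x hx] := absTr_nontriv; exists x; rewrite /psiK.
have [h1 e1] := trnat_spec x.
apply/eqP => h; have : trnat p x = 0%N.
  apply/eqP/negPn/negP => nz.
  have cop : coprime p (trnat p x).
    rewrite prime_coprime //; apply/negP => /dvdn_leq; rewrite lt0n nz => /(_ isT).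
    by rewrite leqNgt h1.
  by move: (zeta_neq1 pp); rewrite (pow1_coprime (prime_gt0 pp) cop (zeta_root pp) h) eqxx.
by move=> t0; move: hx; rewrite -e1 t0 eqxx.
Qed.
End Psi.


Section Chars.
Variables (K : finFieldType) (p : nat) (hp : p \in [pchar K]).
Let pp : prime p := pcharf_prime hp.
Local Notation N := (#|K|.-1).
Local Notation psi := (psiK p).

Lemma N_gt0 : (0 < N)%N.
Proof. by have := card_gt1 K; case: #|K| => [|[]]. Qed.

Lemma unitN (x : K) : x != 0 -> x ^+ N = 1.
Proof.
move=> nz; apply: (mulfI nz); rewrite mulr1 -exprS prednK ?expf_card //.
by apply: leq_trans (card_gt1 K).
Qed.

Lemma reindex_mul (R : nmodType) (b : K) (F : K -> R) : b != 0 ->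
  \sum_(x | x != 0) F x = \sum_(x | x != 0) F (b * x).
Proof.
move=> bnz; rewrite (reindex_inj (mulfI bnz)) /=; apply: eq_bigl => x.
by rewrite mulf_eq0 (negbTE bnz).
Qed.

Lemma sum_psi (a : K) : a != 0 -> \sum_(x : K) psi (a * x) = 0.
Proof.
move=> anz; have -> : \sum_(x : K) psi (a * x) = \sum_(x : K) psi x.
  by rewrite [RHS](reindex_inj (mulfI anz)).
set S := \sum_(x : K) _.
have [y hy] := psi_nontriv hp.
have : psi y * S = S.
  rewrite /S mulr_sumr [RHS](reindex_inj (addrI y)) /=.
  by apply: eq_bigr => x _; rewrite (psiD hp).
move/eqP; rewrite -subr_eq0 -{2}[S]mul1r -mulrBl mulf_eq0 subr_eq0 (negbTE hy).
by move/eqP.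
Qed.

Lemma sum_psi_nz (a : K) : a != 0 -> \sum_(x | x != 0) psi (a * x) = -1.
Proof.
move=> anz; have := sum_psi anz; rewrite (bigD1 0) //= mulr0 (psi0 hp) => /eqP.
by rewrite addrC addr_eq0 => /eqP.
Qed.

Lemma count_nz : #|[pred x : K | x != 0]| = N.
Proof. by rewrite -(cardC1 (0 : K)); apply: eq_card => x; rewrite !inE. Qed.

Lemma sum_nz_const (c : algC) : \sum_(x : K | x != 0) c = c *+ N.
Proof. by rewrite sumr_const count_nz. Qed.

Section MC.
Variable chi : K -> algC.
Hypothesis hchi : mchar chi.

Lemma chiX (x : K) k : x != 0 -> chi (x ^+ k) = chi x ^+ k.
Proof.
case: hchi => h1 hM nz; elim: k => [|k IH]; first by rewrite !expr0.
by rewrite !exprS hM ?expf_neq0 // IH.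
Qed.

Lemma chi_root (x : K) : x != 0 -> chi x ^+ N = 1.
Proof. by move=> nz; rewrite -chiX // unitN //; case: hchi. Qed.

Lemma chi_neq0 (x : K) : x != 0 -> chi x != 0.
Proof.
move=> nz; apply: contra_eq_neq (chi_root nz) => ->.
by rewrite expr0n eqn0Ngt N_gt0 eq_sym oner_eq0.
Qed.

Lemma chi_conj (x : K) : x != 0 -> (chi x)^* = (chi x)^-1.
Proof. by move=> nz; apply: (conj_root1 N_gt0); apply: chi_root. Qed.

Lemma chi_inv (x : K) : x != 0 -> chi x^-1 = (chi x)^-1.
Proof.
move=> nz; case: hchi => h1 hM.
apply: (mulfI (chi_neq0 nz)); rewrite -hM ?invr_eq0 // mulfV // divff //.
exact: chi_neq0.
Qed.

Lemma chi_sum0 : mchar_nontriv chi -> \sum_(x | x != 0) chi x = 0.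
Proof.
case=> b bnz hb; case: hchi => h1 hM.
have : \sum_(x | x != 0) chi x = chi b * \sum_(x | x != 0) chi x.
  rewrite {1}(reindex_mul _ bnz) mulr_sumr; apply: eq_bigr => x xnz.
  by rewrite hM.
move=> h; have : (chi b - 1) * \sum_(x | x != 0) chi x = 0.
  by rewrite mulrBl mul1r -h subrr.
by move/eqP; rewrite mulf_eq0 subr_eq0 (negbTE hb) => /eqP.
Qed.

Lemma sum_delta (F : K -> algC) (c : K) : c != 0 ->
  \sum_(x | x != 0) (if x == c then F x else 0) = F c.
Proof.
move=> cnz; rewrite (bigD1 c) //= eqxx big1 ?addr0 // => x /andP[_ /negbTE ->].
by [].
Qed.

Lemma gauss_norm : mchar_nontriv chi ->
  gaussK p chi * gaussK p (fun a => (chi a)^*) = chi (-1) * #|K|%:R.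
Proof.
move=> ntr; case: hchi => h1 hM.
rewrite /gaussK big_distrr /=.
have step1 : forall x : K, x != 0 -> (\sum_(y | y != 0) chi y * psi y) * ((chi x)^* * psi x)
   = \sum_(t | t != 0) chi t * psi (x * (t + 1)).
  move=> x xnz; rewrite mulr_suml (reindex_mul _ xnz); apply: eq_bigr => t tnz.
  rewrite chi_conj // hM //.
  rewrite mulrDr mulr1 (psiD hp).
  have cx := chi_neq0 xnz; have ct := chi_neq0 tnz.
  by field.
rewrite (eq_bigr _ step1) exchange_big /=.
have step2 : forall t : K, t != 0 -> \sum_(x | x != 0) chi t * psi (x * (t + 1))
   = chi t * (if t == -1 then N%:R else -1).
  move=> t tnz; rewrite -mulr_sumr; congr (_ * _).
  case: eqP => [->|tn1].
    rewrite addNr; under eq_bigr => x _ do rewrite mulr0 (psi0 hp).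
    by rewrite sum_nz_const.
  under eq_bigr => x _ do rewrite mulrC.
  rewrite sum_psi_nz //; apply/eqP => h; apply: tn1.
  by apply/eqP; rewrite -addr_eq0 h.
rewrite (eq_bigr _ step2).
have step3 : forall t : K, t != 0 -> chi t * (if t == -1 then N%:R else -1)
   = (if t == -1 then #|K|%:R * chi t else 0) - chi t.
  move=> t _; case: eqP => _; last by rewrite mulrN1 sub0r.
  have hq : (#|K|%:R : algC) = N%:R + 1.
    by rewrite -(natrD _ _ 1) addn1 prednK // ltnW // card_gt1.
  rewrite hq; ring.
rewrite (eq_bigr _ step3) sumrB sum_delta ?oppr_eq0 ?oner_eq0 //.
by rewrite chi_sum0 // subr0 mulrC.
Qed.
End MC.
End Chars.


Section Prod.
Variables (K : finFieldType) (p : nat) (hp : p \in [pchar K]).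
Let pp : prime p := pcharf_prime hp.
Local Notation N := (#|K|.-1).
Local Notation psi := (psiK p).
Variable d : nat.
Hypotheses (d0 : (0 < d)%N) (cd : coprime d N).

Lemma powd_inj : injective (fun x : K => x ^+ d).
Proof.
move=> x y /= e; move: e; have [->|xnz] := eqVneq x 0 => e.
  by move: e; rewrite expr0n gtn_eqF // => /esym/eqP; rewrite expf_eq0 d0 => /eqP.
have ynz : y != 0 by apply: contra_eq_neq e => ->; rewrite expr0n gtn_eqF // expf_neq0.
have : x / y = 1.
  apply: (@pow1_coprime _ _ N d (N_gt0 K)).
      by rewrite coprime_sym.
    exact: (unitN (mulf_neq0 xnz (invr_neq0 ynz))).
  by rewrite exprMn exprVn e divff // expf_neq0.
by move/(congr1 (fun t => t * y)); rewrite divfK // mul1r.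
Qed.

Lemma sum_powd (F : K -> algC) :
  \sum_(x | x != 0) F (x ^+ d) = \sum_(y | y != 0) F y.
Proof.
rewrite [RHS](reindex_inj powd_inj) /=; apply: eq_bigl => x.
by rewrite expf_eq0 d0.
Qed.

Variable chi : K -> algC.
Hypotheses (hchi : mchar chi) (ntr : mchar_nontriv chi).
Let xi := fun a => (chi a)^* ^+ d.

Lemma xi_mchar : mchar xi.
Proof.
case: hchi => h1 hM; split; first by rewrite /xi h1 conjC1 expr1n.
by move=> x y xnz ynz; rewrite /xi hM // rmorphM exprMn.
Qed.

Lemma xi_nontriv : mchar_nontriv xi.
Proof.
case: ntr => b bnz hb; exists b => //; apply/eqP => h.
have cb := chi_neq0 hchi bnz.
have : chi b ^+ d = 1.
  move: h; rewrite /xi chi_conj // exprVn => /eqP; rewrite invr_eq1 => /eqP.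
  done.
move=> hd; move/eqP: hb; apply.
apply: (@pow1_coprime _ _ N d (N_gt0 K)) => //; first by rewrite coprime_sym.
exact: (chi_root hchi bnz).
Qed.

Lemma gauss_prod :
  gaussK p chi * gaussK p xi = \sum_(a | a != 0) WKd p d a * xi a.
Proof.
case: hchi => h1 hM.
rewrite /WKd; under eq_bigr => a _ do rewrite mulr_suml.
rewrite exchange_big /= (bigD1 0) //=.
have t0 : \sum_(a | a != 0) psi (0 ^+ d + a * 0) * xi a = 0.
  under eq_bigr => a _ do rewrite mulr0 expr0n gtn_eqF // addr0 (psi0 hp) mul1r.
  exact: chi_sum0 xi_mchar xi_nontriv.
rewrite t0 add0r.
have t1 : forall x : K, x != 0 ->
   \sum_(a | a != 0) psi (x ^+ d + a * x) * xi a = (chi (x ^+ d) * psi (x ^+ d)) * gaussK p xi.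
  move=> x xnz; rewrite (reindex_mul _ (invr_neq0 xnz)) /gaussK mulr_sumr.
  apply: eq_bigr => b bnz.
  case: xi_mchar => _ xM.
  rewrite xM ?invr_eq0 // mulrAC mulVf // mul1r (psiD hp).
  have -> : xi x^-1 = chi (x ^+ d).
    by rewrite /xi chi_conj ?invr_eq0 // chi_inv // invrK chiX.
  ring.
rewrite (eq_bigr _ t1) -mulr_suml; congr (_ * _).
rewrite /gaussK (sum_powd (fun y => chi y * psi y)).
by [].
Qed.
End Prod.


Section Fam.
Variables (K : finFieldType) (p : nat) (hp : p \in [pchar K]).
Let pp : prime p := pcharf_prime hp.
Local Notation N := (#|K|.-1).
Local Notation psi := (psiK p).
Variables (g : K) (w : algC).
Hypotheses (pg : N.-primitive_root g) (pw : N.-primitive_root w).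

Definition dl (x : K) : nat := odflt 0%N (omap val [pick i : 'I_N | g ^+ i == x]).

Lemma dlP (x : K) : x != 0 -> g ^+ dl x = x.
Proof.
move=> nz; have [i hi] := prim_rootP pg (unitN nz).
rewrite /dl; case: pickP => [j /eqP //|none].
by move: (none i); rewrite hi eqxx.
Qed.

Lemma g_mod a b : g ^+ a = g ^+ b -> (a %% N = b %% N)%N.
Proof. by move/eqP; rewrite (eq_prim_root_expr pg) => /eqP. Qed.

Lemma w_mod j a b : (a %% N = b %% N)%N -> w ^+ (j * a) = w ^+ (j * b).
Proof.
move=> e; rewrite -(prim_expr_mod pw (j * a)) -modnMmr e modnMmr.
exact: prim_expr_mod.
Qed.

Definition chj (j : nat) (x : K) : algC := w ^+ (j * dl x).

Lemma g_neq0 : g != 0.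
Proof.
apply/eqP => g0; have := prim_expr_order pg; rewrite g0 expr0n.
by rewrite eqn0Ngt (N_gt0 K) /= => /eqP; rewrite eq_sym oner_eq0.
Qed.

Lemma chj_mchar j : mchar (chj j).
Proof.
split.
  rewrite /chj (@w_mod j _ 0) ?muln0 ?expr0 //; apply: g_mod.
  by rewrite dlP ?oner_eq0 // expr0.
move=> x y xnz ynz; rewrite /chj -exprD -mulnDr; apply: w_mod; apply: g_mod.
by rewrite exprD !dlP // mulf_neq0.
Qed.

Lemma dl_g : (dl g %% N = 1 %% N)%N.
Proof. by apply: g_mod; rewrite dlP ?g_neq0 // expr1. Qed.

Lemma chj_g j : chj j g = w ^+ j.
Proof. by rewrite /chj (w_mod _ dl_g) muln1. Qed.

Lemma chj_nontriv j : (0 < j < N)%N -> mchar_nontriv (chj j).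
Proof.
case/andP => j0 jN; exists g; first exact: g_neq0.
rewrite chj_g -(prim_order_dvd pw); apply/negP => /(dvdn_leq j0).
by rewrite leqNgt jN.
Qed.

Lemma sum_wpow e : \sum_(j < N) w ^+ (j * e) = if (N %| e)%N then N%:R else 0.
Proof.
under eq_bigr => j _ do rewrite mulnC exprM.
rewrite (prim_order_dvd pw); case: ifP => [/eqP ->|ne].
  by under eq_bigr => j _ do rewrite expr1n; rewrite sumr_const card_ord.
have h := subrX1 (w ^+ e) N.
rewrite -exprM mulnC exprM (prim_expr_order pw) expr1n subrr in h.
move/eqP: h; rewrite eq_sym mulf_eq0 subr_eq0 ne /= => /eqP.
by [].
Qed.

Variable d : nat.
Hypothesis d0 : (0 < d)%N.

Lemma w_conj : w^* = w ^+ N.-1.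
Proof.
have wnz : w != 0.
  apply/eqP => w0; have := prim_expr_order pw; rewrite w0 expr0n.
  by rewrite eqn0Ngt (N_gt0 K) /= => /eqP; rewrite eq_sym oner_eq0.
rewrite (conj_root1 (N_gt0 K) (prim_expr_order pw)).
have h : w * w ^+ N.-1 = 1 by rewrite -exprS prednK ?(N_gt0 K) // prim_expr_order.
by rewrite -[w^-1]mulr1 -h mulKf.
Qed.

Lemma unit_pred (y : K) : y != 0 -> y ^+ N.-1 = y^-1.
Proof.
move=> ynz; have h : y * y ^+ N.-1 = 1 by rewrite -exprS prednK ?(N_gt0 K) // unitN.
by rewrite -[y^-1]mulr1 -h mulKf.
Qed.

Lemma expansion (a : K) : a != 0 ->
  \sum_(j < N) gaussK p (chj j) * gaussK p (fun x => (chj j x)^* ^+ d) * chj j a ^+ d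
  = N%:R * (WKd p d a - 1).
Proof.
move=> anz.
pose e (x y : K) := (dl x + N.-1 * dl y * d + dl a * d)%N.
have cj j y : (chj j y)^* ^+ d = w ^+ (j * (N.-1 * dl y * d)).
  rewrite /chj rmorphXn /= w_conj -!exprM; congr (w ^+ _).
  ring.
have step1 j : gaussK p (chj j) * gaussK p (fun x => (chj j x)^* ^+ d) * chj j a ^+ d
    = \sum_(x | x != 0) \sum_(y | y != 0) psi x * psi y * w ^+ (j * e x y).
  rewrite /gaussK big_distrl /= big_distrl /=; apply: eq_bigr => x _.
  rewrite big_distrr /= big_distrl /=; apply: eq_bigr => y _.
  rewrite cj /chj -exprM /e !mulnDr !exprD -!mulnA.
  ring.
under eq_bigr => j _ do rewrite step1.
rewrite exchange_big /=; under eq_bigr => x _ do rewrite exchange_big /=.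
have step2 (x y : K) : x != 0 -> y != 0 ->
   \sum_(j < N) psi x * psi y * w ^+ (j * e x y)
   = if x == (y / a) ^+ d then psi x * psi y * N%:R else 0.
  move=> xnz ynz; rewrite -mulr_sumr sum_wpow (prim_order_dvd pg).
  have -> : g ^+ e x y = x * (y ^+ d)^-1 * a ^+ d.
    rewrite /e !exprD dlP // exprM [(_ * dl y)%N]mulnC exprM dlP // unit_pred // exprM dlP //.
    by rewrite exprVn.
  have cnz : (y / a) ^+ d != 0 by rewrite expf_neq0 // mulf_neq0 ?invr_neq0.
  have -> : x * (y ^+ d)^-1 * a ^+ d = x / (y / a) ^+ d.
    by rewrite exprMn exprVn invfM invrK mulrA.
  have -> : (x / (y / a) ^+ d == 1) = (x == (y / a) ^+ d).
    apply/eqP/eqP => [h|->]; last by rewrite divff.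
    by rewrite -(divfK cnz x) h mul1r.
  by case: ifP; rewrite ?mulr0.
rewrite exchange_big /=.
have step3 (y : K) : y != 0 -> \sum_(x | x != 0) \sum_(j < N) psi x * psi y * w ^+ (j * e x y)
    = N%:R * (psi ((y / a) ^+ d) * psi y).
  move=> ynz; rewrite (eq_bigr (fun x => if x == (y / a) ^+ d then psi x * psi y * N%:R else 0)).
    rewrite sum_delta; first by rewrite mulrC.
    by rewrite expf_neq0 // mulf_neq0 ?invr_neq0.
  by move=> x xnz; rewrite step2.
rewrite (eq_bigr _ step3) -mulr_sumr; congr (_ * _).
rewrite (reindex_mul _ anz).
have -> : WKd p d a - 1 = \sum_(z | z != 0) psi (z ^+ d + a * z).
  rewrite /WKd (bigD1 0) //= expr0n gtn_eqF // mulr0 addr0 (psi0 hp) addrC addrK.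
  by [].
by apply: eq_bigr => z znz; rewrite (psiD hp) [a * z]mulrC mulfK.
Qed.
End Fam.


Lemma gauss_ext (K : finFieldType) p (f g : K -> algC) :
  (forall a, f a = g a) -> gaussK p f = gaussK p g.
Proof. by move=> h; apply: eq_bigr => a _; rewrite h. Qed.

Theorem lemma4p1 (K : finFieldType) (p d : nat) (v : algC -> option rat) :
  p \in [pchar K] ->
  (2 < #|K|)%N ->
  coprime d #|K|.-1 ->
  pval p v ->
  is_omin
    (fun m => exists chi : K -> algC,
       [/\ mchar chi, mchar_nontriv chi &
           m = v (@gaussK K p chi * @gaussK K p (fun a => (chi a)^* ^+ d))])
    (@VKd K p v d).
Proof.
move=> hp hq cd hv.
have pp := pcharf_prime hp.
have N0 := N_gt0 K.
have N1 : (1 < #|K|.-1)%N by move: hq; case: #|K| => [|[|[|m]]].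
have d0 : (0 < d)%N.
  by case: d cd => // ; rewrite /coprime gcd0n => /eqP h; rewrite h in N1.
have [g pg] : exists g : K, (#|K|.-1).-primitive_root g.
  have := @has_prim_root K #|K|.-1 [seq x <- enum K | x != 0] N0.
  case/(_ _ _ _)/hasP => [||| g _ hg]; last by exists g.
  - by apply/allP => x; rewrite mem_filter => /andP[xnz _]; rewrite unity_rootE unitN.
  - by rewrite filter_uniq // enum_uniq.
  - rewrite -(count_nz K) cardE /enum_mem !size_filter count_filter.
    by apply: eq_leq; apply: eq_count => x /=; rewrite !inE andbT.
have [w pw] := C_prim_root_exists N0.
pose G (chi : K -> algC) := gaussK p chi * gaussK p (fun a => (chi a)^* ^+ d).
have partii : forall chi : K -> algC, mchar chi -> mchar_nontriv chi ->
    ole (@VKd K p v d) (v (G chi)).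
  move=> chi hchi ntr; rewrite /G (gauss_prod hp d0 cd hchi ntr).
  apply: ole_trans (v_sum hv _ _ _); rewrite /VKd.
  rewrite [X in ole _ X](eq_bigr (fun a => v (WKd p d a))); first exact: ole_refl.
  move=> a anz; apply: (v_mulunit hv).
  exact: (v_root1 hv N0 (chi_root (xi_mchar d hchi) anz)).
have [n [en n0]] : exists n, #|K| = (p ^ n)%N /\ (0 < n)%N.
  by exists (logn p #|K|); split; [exact: cardK hp | exact: n_gt0 hp].
have vq : v (#|K|%:R) = Some (n%:R).
  by rewrite en natrX (vX hv) (vp hv); case: n n0 en.
have eK : #|K| = (#|K|.-1).+1 by rewrite prednK // (ltn_trans _ hq).
have eKR : (#|K|%:R : algC) = #|K|.-1%:R + 1 by rewrite [in LHS]eK -addn1 natrD.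
have vNn : v (#|K|.-1%:R) = Some 0.
  have -> : (#|K|.-1%:R : algC) = -1 + #|K|%:R by rewrite eKR; ring.
  rewrite (v_strict hv) ?(vN1 hv) // vq /=.
  by rewrite -ltNge ltr0n.
pose M := \big[omin/None]_(j <- index_iota 1 #|K|.-1) v (G (chj g w j)).
have vchj j a : a != 0 -> v (chj g w j a ^+ d) = Some 0.
  move=> anz; apply: (v_root1 hv N0).
  by rewrite -exprM mulnC exprM (chi_root (chj_mchar pg pw j) anz) expr1n.
have chj0 x : chj g w 0 x = 1 by rewrite /chj mul0n expr0.
have sumpsi : \sum_(x : K | x != 0) psiK p x = -1.
  by rewrite -(sum_psi_nz hp (oner_neq0 K)); apply: eq_bigr => x _; rewrite mul1r.
have lowa : forall a : K, a != 0 -> ole (omin (Some n%:R) M) (v (WKd p d a)).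
  move=> a anz; have E := expansion hp pg pw d0 anz.
  have {}E : \sum_(0 <= j < #|K|.-1) gaussK p (chj g w j) * gaussK p (fun x => (chj g w j x)^* ^+ d) * chj g w j a ^+ d = #|K|.-1%:R * (WKd p d a - 1).
    by rewrite big_mkord; exact: E.
  rewrite big_ltn // in E.
  have F0 : gaussK p (chj g w 0) * gaussK p (fun x => (chj g w 0 x)^* ^+ d) * chj g w 0 a ^+ d = 1.
    rewrite /gaussK chj0 expr1n mulr1.
    under eq_bigr => x _ do rewrite chj0 mul1r.
    under [X in _ * X]eq_bigr => x _ do rewrite chj0 conjC1 expr1n mul1r.
    by rewrite sumpsi mulrNN mulr1.
  rewrite F0 in E.
  have eW : v (WKd p d a) = v (#|K|%:R + \sum_(1 <= j < #|K|.-1)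
        gaussK p (chj g w j) * gaussK p (fun x => (chj g w j x)^* ^+ d) * chj g w j a ^+ d).
    rewrite -[in LHS](v_mulunit hv _ vNn); congr (v _).
    rewrite eKR -addrA E; ring.
  rewrite eW; apply: ole_trans (vD hv _ _); apply: omin_mono; first by rewrite vq; exact: ole_refl.
  apply: ole_trans (v_sum hv _ _ _); rewrite /M.
  rewrite [X in ole _ X](eq_bigr (fun j => v (G (chj g w j)))); first exact: ole_refl.
  by move=> j _; rewrite (v_mulunit hv _ (vchj j a anz)).
have hV : ole (omin (Some n%:R) M) (@VKd K p v d).
  by apply: big_omin_glb => a anz; exact: lowa.
split; last by move=> x [chi [h1 h2 ->]]; exact: partii.
case/orP: (ole_total M (Some n%:R)) => hM.
  rewrite (omin_r _ _ hM) in hV.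
  have [M0|[j0 hj0 Mj0]] := big_omin_att2 (index_iota 1 #|K|.-1) (fun j => v (G (chj g w j))).
    by rewrite /M M0 in hM.
  rewrite mem_index_iota in hj0.
  exists (chj g w j0); split; first exact: chj_mchar pg pw j0.
    by apply: chj_nontriv.
  apply: ole_anti; first exact: partii (chj_mchar pg pw j0) (chj_nontriv pg pw hj0).
  by rewrite /M Mj0 in hV.
rewrite (omin_l _ _ hM) in hV.
pose chi1 := chj g w 1.
have hchi1 : mchar chi1 := chj_mchar pg pw 1.
have ntr1 : mchar_nontriv chi1 by rewrite /chi1; apply: chj_nontriv.
have wn1 : w != 1.
  apply/eqP => w1; have := prim_order_dvd pw 1; rewrite expr1 w1 eqxx => /dvdn_leq.
  by move=> /(_ isT); rewrite leqNgt N1.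
have chi1g : chi1 g = w by rewrite /chi1 (chj_g pg pw) expr1.
pose chi' := fun a => (chi1 a)^*.
have hchi' : mchar chi'.
  case: hchi1 => e1 eM; split; first by rewrite /chi' e1 conjC1.
  by move=> x y xnz ynz; rewrite /chi' eM // rmorphM.
have ntr' : mchar_nontriv chi'.
  exists g; first exact: g_neq0 pg.
  rewrite /chi' chi1g; apply/eqP => h; move: (congr1 (@Num.conj_op _) h).
  by rewrite conjCK conjC1 => w1; rewrite w1 eqxx in wn1.
pose chid := fun a => chi1 a ^+ d.
have hchid : mchar chid.
  case: hchi1 => e1 eM; split; first by rewrite /chid e1 expr1n.
  by move=> x y xnz ynz; rewrite /chid eM // exprMn.
have ntrd : mchar_nontriv chid.
  exists g; first exact: g_neq0 pg.
  rewrite /chid chi1g -(prim_order_dvd pw); apply/negP => Nd.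
  have := coprime_dvdl Nd (cd : coprime d #|K|.-1).
  by rewrite /coprime gcdnn => /eqP h; rewrite h in N1.
have eP : G chi1 * G chi' = (chi1 (-1) * #|K|%:R) * (chid (-1) * #|K|%:R).
  rewrite -(gauss_norm hp hchi1 ntr1) -(gauss_norm hp hchid ntrd) /G.
  rewrite (@gauss_ext K p (fun a => (chi' a)^* ^+ d) chid); last first.
    by move=> a; rewrite /chi' /chid conjCK.
  rewrite (@gauss_ext K p (fun a => (chid a)^*) (fun a => (chi1 a)^* ^+ d)); last first.
    by move=> a; rewrite /chid rmorphXn.
  rewrite /chi'; ring.
have m1N : (-1 : K) != 0 by rewrite oppr_eq0 oner_eq0.
have vc1 : v (chi1 (-1)) = Some 0 := v_root1 hv N0 (chi_root hchi1 m1N).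
have vcd : v (chid (-1)) = Some 0 := v_root1 hv N0 (chi_root hchid m1N).
have m1m2 : oadd (v (G chi1)) (v (G chi')) = Some (n%:R + n%:R).
  by rewrite -(vM hv) eP !(vM hv) vc1 vcd vq /= !add0r.
have l1 := ole_trans _ _ _ hV (partii _ hchi1 ntr1).
have l2 := ole_trans _ _ _ hV (partii _ hchi' ntr').
have em1 : v (G chi1) = Some n%:R.
  move: m1m2 l1 l2; case: (v (G chi1)) => [r1|] //; case: (v (G chi')) => [r2|] //=.
  move=> [] e12 h1 h2; congr Some; lra.
exists chi1; split => //; apply: ole_anti; first exact: partii.
by rewrite em1.
Qed.
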